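(* Let $q$, $\phi,\theta$, $U_1$ and $a^*,b^*$ be as in the context, and for $\lambda\in(0,\infty)$ let $\xi(\lambda)=-\frac{b^*}{2a^*}+\frac{i}{a^*}$ and $\psi(x,\lambda)=\theta(x,\lambda)-\xi(\lambda)\phi(x,\lambda)$. Then for every $x_0>0$ and every $\lambda\in(0,\infty)$, \[\lim_{N\to\infty}\frac{\int_{x_0}^N\psi(x,\lambda)^2\,dx}{\int_{x_0}^N|\psi(x,\lambda)|^2\,dx}=0.\]
   Context: $-y''+qy=\lambda y$ on $(0,\infty)$, $q(x)=\frac{q_0}{x^2}+\frac{q_1}{x}+\sum_{n\ge0}q_{n+2}x^n$ with real coefficients, series convergent on $(0,\infty)$, $q_0\ge-\tfrac14$, $q_0,q_1$ not both zero, $q\to0$ at $\infty$, and for some $x_0>0$ either $q\in L_1(x_0,\infty)$ or ($q'\in L_1(x_0,\infty)$, $q\in AC_{loc}[x_0,\infty)$). $\phi,\theta$: with $q_0=\nu^2-\frac14$, $\nu\ge0$, $\phi=x^{1/2+\nu}(1+\sum_{n\ge1}a_n(\lambda)x^n)$ is the Frobenius solution at $0$ for the larger indicial root, $y_2$ a second (possibly logarithmic) Frobenius solution with leading coefficient $1$ and coefficients real polynomials in $\lambda$, $C=W(\phi,y_2)\ne0$ real, $\theta=y_2/C$, so $W(\phi,\theta)=1$. Appell system: $(P,Q,R)'=M(P,Q,R)^T$, $M=\begin{pmatrix}0&\lambda-q&0\\-2&0&2(\lambda-q)\\0&-1&0\end{pmatrix}$; $U_1$ is its unique solution with $\lim_{x\to\infty}U_1=(\sqrt\lambda,0,1/\sqrt\lambda)^T$,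 and $a^*,b^*,c^*$ are the real coefficients with $U_1=a^*((\theta')^2,-2\theta\theta',\theta^2)^T+b^*(\theta'\phi',-(\theta\phi'+\theta'\phi),\theta\phi)^T+c^*((\phi')^2,-2\phi\phi',\phi^2)^T$ (one has $a^*>0$). *)

(* Defs.v *)
From Stdlib Require Import Reals.
From Coquelicot Require Import Coquelicot.
Open Scope R_scope.

(* The potential q(x) = q0/x^2 + q1/x + sum_{n>=0} c n x^n,
   where c n plays the role of q_{n+2}. *)
Definition qpot (q0 q1 : R) (c : nat -> R) (x : R) : R :=
  q0 / x ^ 2 + q1 / x + PSeries c x.

Definition is_sol (q : R -> R) (lam : R) (y : R -> R) : Prop :=
  forall x, 0 < x ->
    ex_derive y x /\ ex_derive (Derive y) x /\
    - Derive (Derive y) x + q x * y x = lam * y x.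

Definition wronskian (f g : R -> R) (x : R) : R :=
  f x * Derive g x - Derive f x * g x.

(* f is (Lebesgue) integrable on (a, oo); f is continuous there in our use,
   so this is improper Riemann integrability of |f|. *)
Definition L1_tail (f : R -> R) (a : R) : Prop :=
  ex_RInt_gen (fun x => Rabs (f x)) (at_point a) (Rbar_locally p_infty).

(* Main.v *)
Require Import Defs.
From Stdlib Require Import Reals Lra Field.
From Coquelicot Require Import Coquelicot.
Open Scope R_scope.

Lemma lim_eps (f : R -> R) (l : R) : is_lim f p_infty l ->
  forall eps, 0 < eps -> exists M, forall x, M < x -> Rabs (f x - l) < eps.
Proof.
  intros Hl eps He. apply is_lim_spec in Hl.
  destruct (Hl (mkposreal eps He)) as [M HM]. exists M. exact HM.
Qed.

Lemma pos_loc x : 0 < x -> locally x (fun t => 0 < t).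
Proof.
  intros Hx. exists (mkposreal x Hx). intros t Ht.
  unfold ball in Ht; simpl in Ht; unfold AbsRing_ball, abs, minus, plus, opp in Ht; simpl in Ht.
  destruct (Rabs_def2 _ _ Ht). lra.
Qed.

Lemma minmax_pos a b z : 0 < a -> 0 < b -> Rmin a b <= z <= Rmax a b -> 0 < z.
Proof.
  intros Ha Hb [H1 _]. assert (0 < Rmin a b) by (apply Rmin_glb_lt; auto). lra.
Qed.

Lemma test (S H : R -> R) (dS dH : R -> R) x : is_derive S x (dS x) -> is_derive H x (dH x) ->
  is_derive (fun t => S t * H t) x (dS x * H x + S x * dH x).
Proof.
  intros h1 h2. auto_derive. split; [eexists; exact h1|split;[eexists;exact h2|auto]].
  replace (Derive (fun x => S x) x) with (dS x) by (symmetry; apply is_derive_unique; exact h1).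
  replace (Derive (fun x => H x) x) with (dH x) by (symmetry; apply is_derive_unique; exact h2). ring.
Qed.

Lemma exRInt_pos (f : R -> R) a b : 0 < a -> 0 < b -> (forall x, 0 < x -> continuous f x) -> ex_RInt f a b.
Proof.
  intros Ha Hb Hc. apply (@ex_RInt_continuous R_CompleteNormedModule). intros z Hz. apply Hc. eapply minmax_pos; [exact Ha|exact Hb|exact Hz].
Qed.

Lemma tri3 x y z : Rabs (x + y - z) <= Rabs x + Rabs y + Rabs z.
Proof.
  unfold Rminus. eapply Rle_trans; [apply Rabs_triang|]. rewrite Rabs_Ropp.
  pose proof (Rabs_triang x y). lra.
Qed.

Lemma core_F (lam : R) (q P Q S F G H : R -> R) (A x0 : R) :
  0 < lam -> 0 < x0 -> 0 <= A ->
  (forall x, 0 < x -> is_derive S x (- Q x)) ->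
  (forall x, 0 < x -> is_derive H x (G x + (q x - lam) * F x)) ->
  (forall x, 0 < x -> continuous (fun t => - Q t * H t + S t * (G t + (q t - lam) * F t)) x) ->
  (forall x, 0 < x -> continuous F x) ->
  (forall x, 0 < x -> P x * F x + S x * G x + Q x * H x = 0) ->
  (forall x, 0 < x -> Rabs (F x) <= Rabs (S x) * A) ->
  (forall x, 0 < x -> Rabs (H x) <= (Rabs (S x) + Rabs (P x)) * A) ->
  is_lim P p_infty (sqrt lam) -> is_lim Q p_infty 0 ->
  is_lim S p_infty (1 / sqrt lam) -> is_lim q p_infty 0 ->
  forall eps, 0 < eps -> exists X K, x0 <= X /\
    forall N, X <= N -> Rabs (RInt F x0 N) <= K + eps * N.
Proof.
  intros Hlam Hx0 HA HS HH HDc HFc Hid HFb HHb HPl HQl HSl Hql eps Heps.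
  set (s := sqrt lam).
  assert (Hs : 0 < s) by (apply sqrt_lt_R0; auto).
  assert (Hss : s * s = lam) by (apply sqrt_sqrt; lra).
  set (BS := 1/s + 1). set (BP := s + 1).
  assert (HBS : 0 < BS) by (unfold BS; assert (0 < 1/s) by (apply Rdiv_lt_0_compat; lra); lra).
  assert (HBP : 0 < BP) by (unfold BP; lra).
  set (Cst := 2*(BS+BP)*A + (1+s*s+BS)*BS*A).
  assert (HCst : 0 <= Cst).
  { unfold Cst. assert (0 <= s*s) by nra. assert (0 <= (BS+BP)*A) by nra.
    assert (0 <= (1+s*s+BS)*BS) by nra. nra. }
  set (eps' := 2*s*eps).
  assert (He' : 0 < eps') by (unfold eps'; nra).
  set (d := Rmin 1 (eps' / (Cst + 1))).
  assert (Hd : 0 < d) by (unfold d; apply Rmin_glb_lt; [lra| apply Rdiv_lt_0_compat; lra]).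
  assert (Hd1 : d <= 1) by (unfold d; apply Rmin_l).
  assert (HdC : d * Cst <= eps').
  { unfold d. assert (Rmin 1 (eps' / (Cst + 1)) <= eps' / (Cst+1)) by apply Rmin_r.
    assert (eps' / (Cst+1) * Cst <= eps').
    { unfold Rdiv. rewrite Rmult_assoc. 
      assert (/(Cst+1) * Cst <= 1).
      { apply (Rmult_le_reg_l (Cst+1)); [lra|]. rewrite <- Rmult_assoc, Rinv_r by lra. lra. }
      assert (0 <= /(Cst+1) * Cst). { apply Rmult_le_pos; [left; apply Rinv_0_lt_compat; lra|lra]. }
      nra. }
    nra. }
  destruct (lim_eps _ _ HPl d Hd) as [M1 HM1].
  destruct (lim_eps _ _ HQl d Hd) as [M2 HM2].
  destruct (lim_eps _ _ HSl d Hd) as [M3 HM3].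
  destruct (lim_eps _ _ Hql d Hd) as [M4 HM4].
  set (X := Rmax x0 (Rmax (Rmax M1 M2) (Rmax M3 M4)) + 1).
  assert (HX0 : x0 <= X) by (unfold X; pose proof (Rmax_l x0 (Rmax (Rmax M1 M2) (Rmax M3 M4))); lra).
  assert (HXM : forall t, X <= t -> M1 < t /\ M2 < t /\ M3 < t /\ M4 < t /\ 0 < t).
  { intros t Ht. unfold X in Ht.
    pose proof (Rmax_l x0 (Rmax (Rmax M1 M2) (Rmax M3 M4))).
    pose proof (Rmax_r x0 (Rmax (Rmax M1 M2) (Rmax M3 M4))).
    pose proof (Rmax_l (Rmax M1 M2) (Rmax M3 M4)). pose proof (Rmax_r (Rmax M1 M2) (Rmax M3 M4)).
    pose proof (Rmax_l M1 M2). pose proof (Rmax_r M1 M2). pose proof (Rmax_l M3 M4). pose proof (Rmax_r M3 M4).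
    repeat split; lra. }
  set (Dsh := fun t => - Q t * H t + S t * (G t + (q t - lam) * F t)).
  assert (HB : forall t, X <= t -> Rabs (S t) <= BS /\ Rabs (P t) <= BP /\
             Rabs (F t) <= BS * A /\ Rabs (H t) <= (BS + BP) * A /\
             Rabs (2 * s * F t + Dsh t) <= eps').
  { intros t Ht. destruct (HXM t Ht) as (h1 & h2 & h3 & h4 & h5).
    specialize (HM1 t h1). specialize (HM2 t h2). specialize (HM3 t h3). specialize (HM4 t h4).
    fold s in HM1, HM3. rewrite Rminus_0_r in HM2, HM4.
    assert (bS : Rabs (S t) <= BS).
    { unfold BS. pose proof (Rabs_triang_inv (S t) (1/s)).
      assert (Rabs (1/s) = 1/s) by (apply Rabs_right; left; apply Rdiv_lt_0_compat; lra). lra. }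
    assert (bP : Rabs (P t) <= BP).
    { unfold BP. pose proof (Rabs_triang_inv (P t) s). rewrite (Rabs_right s) in H0 by lra. lra. }
    assert (bF : Rabs (F t) <= BS * A) by (specialize (HFb t h5); nra).
    assert (bH : Rabs (H t) <= (BS + BP) * A).
    { specialize (HHb t h5). assert (Rabs (S t) + Rabs (P t) <= BS + BP) by lra. nra. }
    repeat split; auto.
    assert (Er : 2 * s * F t + Dsh t =
      - (2 * Q t * H t) - ((P t - s) + s * s * (S t - 1/s) - S t * q t) * F t).
    { unfold Dsh. specialize (Hid t h5).
      replace (S t * (G t + (q t - lam) * F t)) with (S t * G t + S t * (q t - lam) * F t) by ring.
      replace (S t * G t) with (- (P t * F t) - Q t * H t) by lra.
      rewrite <- Hss. field. lra. }
    rewrite Er.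
    eapply Rle_trans; [apply Rabs_triang|]. rewrite Rabs_Ropp, Rabs_Ropp.
    rewrite !Rabs_mult.
    assert (Rabs 2 = 2) by (apply Rabs_right; lra). rewrite H0.
    assert (T1 : Rabs (P t - s + s * s * (S t - 1 / s) - S t * q t) <= d + s*s*d + BS*d).
    { eapply Rle_trans; [apply tri3|].
      rewrite !Rabs_mult. rewrite (Rabs_right s) by lra.
      assert (Rabs (S t) * Rabs (q t) <= BS * d).
      { apply Rmult_le_compat; try apply Rabs_pos; lra. }
      assert (s*s*Rabs (S t - 1/s) <= s*s*d). { apply Rmult_le_compat_l; nra. }
      lra. }
    assert (T2 : 2 * Rabs (Q t) * Rabs (H t) <= 2 * d * ((BS+BP)*A)).
    { assert (Rabs (Q t) * Rabs (H t) <= d * ((BS+BP)*A)).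
      { apply Rmult_le_compat; try apply Rabs_pos; lra. } lra. }
    assert (T3 : Rabs (P t - s + s * s * (S t - 1 / s) - S t * q t) * Rabs (F t)
                  <= (d + s*s*d + BS*d) * (BS * A)).
    { apply Rmult_le_compat; try apply Rabs_pos; lra. }
    assert (d * Cst = 2 * d * ((BS+BP)*A) + (d + s*s*d + BS*d) * (BS * A)) by (unfold Cst; ring).
    lra. }
  set (K := Rabs (RInt F x0 X) + BS * ((BS + BP) * A) / s).
  exists X, K. split; auto.
  intros N HN.
  assert (HXp : 0 < X) by lra. assert (HNp : 0 < N) by lra.
  assert (HDc' : forall x, 0 < x -> continuous Dsh x) by (intros; apply HDc; auto).
  assert (exF1 : ex_RInt F x0 X) by (apply exRInt_pos; auto).
  assert (exF2 : ex_RInt F X N) by (apply exRInt_pos; auto).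
  assert (exD : ex_RInt Dsh X N) by (apply exRInt_pos; auto).
  assert (Ch : RInt F x0 N = RInt F x0 X + RInt F X N).
  { rewrite <- (RInt_Chasles F x0 X N); auto. }
  assert (ID : RInt Dsh X N = S N * H N - S X * H X).
  { apply is_RInt_unique.
    apply (is_RInt_derive (fun t => S t * H t) Dsh X N).
    - intros x Hx. assert (0 < x) by (eapply minmax_pos; [exact HXp|exact HNp|exact Hx]).
      unfold Dsh. apply (test S H (fun t => - Q t) (fun t => G t + (q t - lam) * F t) x); auto.
    - intros x Hx. apply HDc'. eapply minmax_pos; [exact HXp|exact HNp|exact Hx]. }
  assert (IR : RInt (fun t => 2 * s * F t + Dsh t) X N = 2 * s * RInt F X N + RInt Dsh X N).
  { apply is_RInt_unique. apply (is_RInt_plus (fun t => 2 * s * F t) Dsh).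
    - apply (is_RInt_scal F). apply (@RInt_correct R_CompleteNormedModule); auto.
    - apply (@RInt_correct R_CompleteNormedModule); auto. }
  assert (exR : ex_RInt (fun t => 2 * s * F t + Dsh t) X N).
  { eexists. apply (is_RInt_plus (fun t => 2 * s * F t) Dsh).
    - apply (is_RInt_scal F). apply (@RInt_correct R_CompleteNormedModule); auto.
    - apply (@RInt_correct R_CompleteNormedModule); auto. }
  assert (BR : Rabs (RInt (fun t => 2 * s * F t + Dsh t) X N) <= (N - X) * eps').
  { apply abs_RInt_le_const; auto. intros t Ht. apply (HB t). lra. }
  assert (BSH : forall t, X <= t -> Rabs (S t * H t) <= BS * ((BS + BP) * A)).
  { intros t Ht. destruct (HB t Ht) as (b1 & _ & _ & b4 & _). rewrite Rabs_mult.
    apply Rmult_le_compat; try apply Rabs_pos; auto. }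
  assert (E2 : RInt F X N = (RInt (fun t => 2 * s * F t + Dsh t) X N - (S N * H N - S X * H X)) / (2 * s)).
  { rewrite IR, ID. generalize (RInt F X N). intro z. simpl in z |- *. field. lra. }
  assert (B2 : Rabs (RInt F X N) <= (N - X) * eps + BS * ((BS + BP) * A) / s).
  { rewrite E2. unfold Rdiv. rewrite Rabs_mult. rewrite (Rabs_right (/ (2*s))) by (left; apply Rinv_0_lt_compat; lra).
    assert (Rabs (RInt (fun t => 2 * s * F t + Dsh t) X N - (S N * H N - S X * H X))
             <= (N - X) * eps' + 2 * (BS * ((BS + BP) * A))).
    { unfold Rminus at 1. eapply Rle_trans; [apply Rabs_triang|]. rewrite Rabs_Ropp.
      unfold Rminus. eapply Rle_trans; [apply Rplus_le_compat_l; apply Rabs_triang|].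
      rewrite Rabs_Ropp. pose proof (BSH N HN). pose proof (BSH X (Rle_refl X)). lra. }
    apply Rle_trans with (((N - X) * eps' + 2 * (BS * ((BS + BP) * A))) * / (2*s)).
    { apply Rmult_le_compat_r; [left; apply Rinv_0_lt_compat; lra| auto]. }
    unfold eps'. right. field. lra. }
  rewrite Ch. eapply Rle_trans; [apply Rabs_triang|]. unfold K.
  assert ((N - X) * eps <= eps * N) by nra. lra.
Qed.

Lemma core_D (lam : R) (S g : R -> R) (a x0 : R) :
  0 < lam -> 0 < x0 -> 
  (forall x, 0 < x -> continuous g x) ->
  (forall x, 0 < x -> 0 <= g x) ->
  (forall x, 0 < x -> S x = a * g x) ->
  is_lim S p_infty (1 / sqrt lam) ->
  exists X m, x0 <= X /\ 0 < m /\ forall N, X <= N -> m * (N - X) <= RInt g x0 N.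
Proof.
  intros Hlam Hx0 Hgc Hg0 HSg HSl.
  set (s := sqrt lam).
  assert (Hs : 0 < s) by (apply sqrt_lt_R0; auto).
  assert (Hi : 0 < 1/s) by (apply Rdiv_lt_0_compat; lra).
  destruct (lim_eps _ _ HSl (1/(2*s))) as [M HM].
  { apply Rdiv_lt_0_compat; lra. }
  set (X := Rmax x0 M + 1).
  assert (HX0 : x0 <= X) by (unfold X; pose proof (Rmax_l x0 M); lra).
  assert (HXM : M < X) by (unfold X; pose proof (Rmax_r x0 M); lra).
  set (m := 1 / (2 * s * (Rabs a + 1))).
  assert (Hm : 0 < m) by (unfold m; apply Rdiv_lt_0_compat; pose proof (Rabs_pos a); nra).
  assert (Hgt : forall t, X <= t -> m <= g t).
  { intros t Ht. assert (Ht0 : 0 < t) by lra. specialize (HM t ltac:(lra)). fold s in HM.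
    pose proof (Hg0 t Ht0). rewrite (HSg t Ht0) in HM.
    destruct (Rabs_def2 _ _ HM) as [_ Hl].
    assert (1/(2*s) <= a * g t) by (assert (1/s = 2 * (1/(2*s))) by (field; lra); lra).
    assert (a * g t <= (Rabs a + 1) * g t).
    { pose proof (Rle_abs a). nra. }
    unfold m. apply (Rmult_le_reg_l (2 * s * (Rabs a + 1))). pose proof (Rabs_pos a); nra.
    replace (2 * s * (Rabs a + 1) * (1 / (2 * s * (Rabs a + 1)))) with 1 by (field; pose proof (Rabs_pos a); split; lra).
    assert (1 = 2*s * (1/(2*s))) by (field; lra). nra. }
  exists X, m. split; [auto| split; [auto|]].
  intros N HN.
  assert (HXp : 0 < X) by lra.
  assert (e1 : ex_RInt g x0 X) by (apply exRInt_pos; auto; lra).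
  assert (e2 : ex_RInt g X N) by (apply exRInt_pos; auto; lra).
  rewrite <- (RInt_Chasles g x0 X N) by auto.
  assert (0 <= RInt g x0 X).
  { apply RInt_ge_0; auto. intros x Hx. apply Hg0. lra. }
  assert (RInt (fun _ => m) X N <= RInt g X N).
  { apply RInt_le; auto. apply ex_RInt_const. intros x Hx. apply Hgt. lra. }
  rewrite RInt_const in H0. unfold scal in H0; simpl in H0. unfold mult in H0; simpl in H0.
  change plus with Rplus. simpl. lra.
Qed.

Lemma ratio (I D : R -> R) (x0 : R) :
  (forall eps, 0 < eps -> exists X K, x0 <= X /\ forall N, X <= N -> Rabs (I N) <= K + eps * N) ->
  (exists X m, x0 <= X /\ 0 < m /\ forall N, X <= N -> m * (N - X) <= D N) ->
  forall eps, 0 < eps -> exists M, forall N, M < N -> 0 < D N /\ Rabs (I N / D N) < eps.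
Proof.
  intros HI [X' [m [HX' [Hm HD]]]] eps He.
  destruct (HI (eps * m / 4)) as [X [K [HX HK]]].
  { apply Rdiv_lt_0_compat; nra. }
  set (M := Rmax (Rmax X X') (Rmax (2 * Rabs X') (4 * Rabs K / (eps * m))) + 1).
  exists M. intros N HN.
  pose proof (Rmax_l (Rmax X X') (Rmax (2 * Rabs X') (4 * Rabs K / (eps * m)))).
  pose proof (Rmax_r (Rmax X X') (Rmax (2 * Rabs X') (4 * Rabs K / (eps * m)))).
  pose proof (Rmax_l X X'). pose proof (Rmax_r X X').
  pose proof (Rmax_l (2 * Rabs X') (4 * Rabs K / (eps * m))).
  pose proof (Rmax_r (2 * Rabs X') (4 * Rabs K / (eps * m))).
  unfold M in HN.
  assert (h1 : X <= N) by lra. assert (h2 : X' <= N) by lra.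
  assert (h3 : 2 * Rabs X' < N) by lra.
  assert (h4 : 4 * Rabs K / (eps * m) < N) by lra.
  specialize (HK N h1). specialize (HD N h2).
  pose proof (Rle_abs X'). pose proof (Rle_abs K).
  assert (hN : 0 < N). { pose proof (Rabs_pos X'). lra. }
  assert (HDp : m * (N / 2) <= D N) by nra.
  assert (HDp' : 0 < D N) by nra.
  split; auto.
  assert (h5 : 4 * Rabs K < N * (eps * m)).
  { apply (Rmult_lt_compat_r (eps * m)) in h4; [|nra].
    replace (4 * Rabs K / (eps * m) * (eps * m)) with (4 * Rabs K) in h4 by (field; nra). lra. }
  unfold Rdiv. rewrite Rabs_mult, Rabs_Rinv by lra. rewrite (Rabs_right (D N)) by lra.
  apply (Rmult_lt_reg_r (D N)); auto. rewrite Rmult_assoc, Rinv_l by lra. nra.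
Qed.

Lemma Cdiv_real (A B D : R) : D <> 0 -> Cdiv (A, B) (RtoC D) = (A / D, B / D).
Proof.
  intros HD. unfold Cdiv, Cmult, Cinv, RtoC. simpl. f_equal; field; auto.
Qed.

Lemma ball_C (x y eps : R) : Rabs x < eps -> Rabs y < eps -> ball (RtoC 0) eps ((x, y) : C).
Proof.
  intros h1 h2. split; simpl; unfold ball; simpl; unfold AbsRing_ball, abs, minus, plus, opp; simpl;
  [replace (x + - 0) with x by ring|replace (y + - 0) with y by ring]; auto.
Qed.

Lemma rad_inf (c : nat -> R) : (forall x, 0 < x -> ex_pseries c x) ->
  forall x, Rbar_lt (Rabs x) (CV_radius c).
Proof.
  intros Hc x. pose proof (CV_radius_ge_0 c) as H0.
  destruct (CV_radius c) as [r| |] eqn:E; simpl in *; auto.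
  destruct (Rlt_le_dec (Rabs x) r) as [h|h]; auto. exfalso.
  set (y := Rabs x + 1).
  assert (Hy : 0 < y) by (unfold y; pose proof (Rabs_pos x); lra).
  apply (CV_disk_outside c y).
  - rewrite E. simpl. rewrite Rabs_right by lra. unfold y. lra.
  - specialize (Hc y Hy). apply ex_series_lim_0 in Hc.
    eapply is_lim_seq_ext; [|exact Hc]. intros n. simpl.
    rewrite pow_n_pow. unfold scal; simpl. unfold mult; simpl. ring.
Qed.

Lemma lin_der (f g : R -> R) (df dg k x : R) :
  is_derive f x df -> is_derive g x dg -> is_derive (fun t => f t + k * g t) x (df + k * dg).
Proof.
  intros h1 h2. auto_derive. split; [eexists; exact h1|split;[eexists;exact h2|auto]].
  replace (Derive (fun x => f x) x) with df by (symmetry; apply is_derive_unique; exact h1).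
  replace (Derive (fun x => g x) x) with dg by (symmetry; apply is_derive_unique; exact h2). ring.
Qed.

Lemma sc_der (g : R -> R) (dg k x : R) :
  is_derive g x dg -> is_derive (fun t => k * g t) x (k * dg).
Proof.
  intros h2. auto_derive; [eexists; exact h2|].
  replace (Derive (fun x => g x) x) with dg by (symmetry; apply is_derive_unique; exact h2). ring.
Qed.

Lemma lim_const_eq (f : R -> R) (k l : R) :
  (forall x, 0 < x -> f x = k) -> is_lim f p_infty l -> k = l.
Proof.
  intros Hf Hl.
  assert (Hk : is_lim f p_infty k).
  { apply (is_lim_ext_loc (fun _ => k)). exists 0. intros; symmetry; auto. apply is_lim_const. }
  apply is_lim_unique in Hl. apply is_lim_unique in Hk. rewrite Hl in Hk. injection Hk. auto.
Qed.

Lemma lim_k (P Q S : R -> R) (lam : R) : 0 < lam ->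
  is_lim P p_infty (sqrt lam) -> is_lim Q p_infty 0 -> is_lim S p_infty (1 / sqrt lam) ->
  is_lim (fun x => 4 * P x * S x - Q x ^ 2) p_infty 4.
Proof.
  intros Hl HP HQ HS.
  assert (Hs : 0 < sqrt lam) by (apply sqrt_lt_R0; auto).
  assert (H1 : is_lim (fun x => P x * S x) p_infty (sqrt lam * (1 / sqrt lam))).
  { apply (is_lim_mult P S p_infty (sqrt lam) (1/sqrt lam)); auto; simpl; try exact I; auto. }
  assert (H2 : is_lim (fun x => Q x * Q x) p_infty (0 * 0)).
  { apply (is_lim_mult Q Q p_infty 0 0); auto; simpl; try exact I; auto. }
  assert (H3 : is_lim (fun x => 4 * (P x * S x)) p_infty (4 * (sqrt lam * (1 / sqrt lam)))).
  { apply (is_lim_scal_l (fun x => P x * S x) 4 p_infty (sqrt lam * (1 / sqrt lam))); auto. }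
  assert (H4 : is_lim (fun x => 4 * (P x * S x) - Q x * Q x) p_infty
             (4 * (sqrt lam * (1 / sqrt lam)) - 0 * 0)).
  { apply (is_lim_minus _ _ p_infty (4 * (sqrt lam * (1 / sqrt lam))) (0*0)); auto. simpl. reflexivity. }
  assert (E : 4 * (sqrt lam * (1 / sqrt lam)) - 0 * 0 = 4) by (field; lra). rewrite E in H4.
  eapply is_lim_ext; [|exact H4]. intros; simpl; ring.
Qed.

Lemma alg (a b th th1 ph ph1 : R) : a <> 0 ->
 let c := (b^2+4)/(4*a) in
 let P := a * th1^2 + b*(th1*ph1) + c*ph1^2 in
 let Q := a*(-2*th*th1) + b*(-(th*ph1+th1*ph)) + c*(-2*ph*ph1) in
 let S := a*th^2 + b*(th*ph) + c*ph^2 in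
 let u := th + b/(2*a)*ph in let u1 := th1 + b/(2*a)*ph1 in
 let v := (-1/a)*ph in let v1 := (-1/a)*ph1 in
 S = a*(u^2+v^2) /\ P = a*(u1^2+v1^2) /\
 P*(u^2-v^2) + S*(u1^2-v1^2) + Q*(u*u1-v*v1) = 0 /\
 P*(2*u*v) + S*(2*u1*v1) + Q*(u*v1+u1*v) = 0.
Proof. intros Ha c P Q S u u1 v v1; unfold P,Q,S,u,u1,v,v1,c.
repeat split; field; auto. Qed.

Lemma bnd1 (a w s z : R) : a <> 0 -> s = a * w -> 0 <= w -> Rabs z <= w ->
  Rabs z <= Rabs s * (1 / Rabs a).
Proof.
  intros Ha Hs Hw Hz. rewrite Hs, Rabs_mult, (Rabs_right w) by lra.
  assert (0 < Rabs a) by (apply Rabs_pos_lt; auto).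
  replace (Rabs a * w * (1 / Rabs a)) with w by (field; lra). auto.
Qed.

Lemma bnd2 (a w1 w2 s p z : R) : a <> 0 -> s = a * w1 -> p = a * w2 -> 0 <= w1 -> 0 <= w2 ->
  Rabs z <= w1 + w2 -> Rabs z <= (Rabs s + Rabs p) * (1 / Rabs a).
Proof.
  intros Ha Hs Hp Hw1 Hw2 Hz. rewrite Hs, Hp, !Rabs_mult, (Rabs_right w1), (Rabs_right w2) by lra.
  assert (0 < Rabs a) by (apply Rabs_pos_lt; auto).
  replace ((Rabs a * w1 + Rabs a * w2) * (1 / Rabs a)) with (w1 + w2) by (field; lra). auto.
Qed.

Lemma der_eq (f : R -> R) x d : is_derive f x d -> Derive (fun t => f t) x = d.
Proof. intros h; apply is_derive_unique; auto. Qed.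

Ltac solve_exd := repeat match goal with
  | |- _ /\ _ => split
  | |- True => exact I
  | H : forall x, 0 < x -> ex_derive ?f x, Hx : 0 < ?y |- ex_derive _ ?y => apply H; exact Hx
  end.

Theorem mainTheorem10
  (q0 q1 : R) (c : nat -> R)
  (Hc : forall x, 0 < x -> ex_pseries c x)
  (Hq0 : -1/4 <= q0)
  (Hq01 : q0 <> 0 \/ q1 <> 0)
  (Hqinf : is_lim (qpot q0 q1 c) p_infty 0)
  (Hqint : exists x1, 0 < x1 /\
     (L1_tail (qpot q0 q1 c) x1 \/ L1_tail (Derive (qpot q0 q1 c)) x1))
  (lam : R) (Hlam : 0 < lam)
  (* phi : Frobenius solution at 0 for the larger indicial root 1/2 + nu *)
  (phi : R -> R) (a : nat -> R)
  (Ha_cv : forall x, 0 < x -> ex_pseries a x)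
  (Ha0 : a 0%nat = 1)
  (Hphi : forall x, 0 < x ->
     phi x = Rpower x (1/2 + sqrt (q0 + 1/4)) * PSeries a x)
  (Hphi_sol : is_sol (qpot q0 q1 c) lam phi)
  (* y2 : second (possibly logarithmic) Frobenius solution, leading coefficient 1 *)
  (y2 : R -> R) (kappa : R) (b : nat -> R)
  (Hb_cv : forall x, 0 < x -> ex_pseries b x)
  (Hb_lead : (0 < sqrt (q0 + 1/4) /\ b 0%nat = 1) \/
             (sqrt (q0 + 1/4) = 0 /\ kappa = 1 /\ b 0%nat = 0))
  (Hy2 : forall x, 0 < x ->
     y2 x = kappa * phi x * ln x + Rpower x (1/2 - sqrt (q0 + 1/4)) * PSeries b x)
  (Hy2_sol : is_sol (qpot q0 q1 c) lam y2)
  (C0 : R) (HC0 : C0 <> 0)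
  (HW : forall x, 0 < x -> wronskian phi y2 x = C0)
  (theta : R -> R) (Htheta : forall x, 0 < x -> theta x = y2 x / C0)
  (* U1 = (P, Q, S) : solution of the Appell system with the given limit at oo *)
  (P Q S : R -> R)
  (HP : forall x, 0 < x -> is_derive P x ((lam - qpot q0 q1 c x) * Q x))
  (HQ : forall x, 0 < x ->
     is_derive Q x (-2 * P x + 2 * (lam - qpot q0 q1 c x) * S x))
  (HS : forall x, 0 < x -> is_derive S x (- Q x))
  (HPlim : is_lim P p_infty (sqrt lam))
  (HQlim : is_lim Q p_infty 0)
  (HSlim : is_lim S p_infty (1 / sqrt lam))
  (astar bstar cstar : R)
  (HUP : forall x, 0 < x ->
     P x = astar * (Derive theta x) ^ 2
           + bstar * (Derive theta x * Derive phi x)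
           + cstar * (Derive phi x) ^ 2)
  (HUQ : forall x, 0 < x ->
     Q x = astar * (-2 * theta x * Derive theta x)
           + bstar * (- (theta x * Derive phi x + Derive theta x * phi x))
           + cstar * (-2 * phi x * Derive phi x))
  (HUS : forall x, 0 < x ->
     S x = astar * (theta x) ^ 2 + bstar * (theta x * phi x)
           + cstar * (phi x) ^ 2) :
  let xi : C := (- (bstar / (2 * astar)), 1 / astar) in
  let psi : R -> C := fun x => Cminus (RtoC (theta x)) (Cmult xi (RtoC (phi x))) in
  forall x0 : R, 0 < x0 ->
    filterlim
      (fun N : R =>
         Cdiv (@RInt C_R_CompleteNormedModule (fun x => Cmult (psi x) (psi x)) x0 N)
              (RtoC (RInt (fun x => (Cmod (psi x)) ^ 2) x0 N)))
      (Rbar_locally p_infty) (locally (RtoC 0)).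
Proof.
  intros xi psi x0 Hx0.
  set (q := qpot q0 q1 c) in *.
  assert (Hrad := rad_inf c Hc).
  assert (Eq : forall x, 0 < x -> ex_derive q x).
  { intros x Hx. unfold q, qpot. auto_derive.
    repeat split; try (intro; nra). apply ex_derive_PSeries, Hrad. }
  set (phi1 := Derive phi) in *.
  assert (Hph : forall x, 0 < x -> is_derive phi x (phi1 x)).
  { intros x Hx. apply Derive_correct. apply (Hphi_sol x Hx). }
  assert (Hph1 : forall x, 0 < x -> is_derive phi1 x ((q x - lam) * phi x)).
  { intros x Hx. destruct (Hphi_sol x Hx) as [h1 [h2 h3]].
    replace ((q x - lam) * phi x) with (Derive phi1 x) by (unfold phi1; lra).
    apply Derive_correct; auto. }
  set (th1 := fun x => Derive y2 x / C0).
  assert (Hth : forall x, 0 < x -> is_derive theta x (th1 x)).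
  { intros x Hx. destruct (Hy2_sol x Hx) as [h1 [h2 h3]].
    apply (is_derive_ext_loc (fun t => y2 t / C0)).
    - apply (filter_imp (fun t => 0 < t)); [intros t Ht; symmetry; apply Htheta; auto| apply pos_loc; auto].
    - unfold th1. auto_derive; [auto|]. change (Derive (fun x => y2 x) x) with (Derive y2 x). field; auto. }
  assert (Hth1 : forall x, 0 < x -> is_derive th1 x ((q x - lam) * theta x)).
  { intros x Hx. destruct (Hy2_sol x Hx) as [h1 [h2 h3]]. unfold th1. rewrite (Htheta x Hx).
    assert (E : Derive (Derive y2) x = (q x - lam) * y2 x) by lra.
    replace ((q x - lam) * (y2 x / C0)) with (Derive (Derive y2) x / C0) by (rewrite E; field; auto).
    auto_derive; [auto|]. change (Derive (fun x => Derive y2 x) x) with (Derive (Derive y2) x). field; auto. }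
  assert (HDth : forall x, 0 < x -> Derive theta x = th1 x) by (intros; apply is_derive_unique; auto).
  assert (HW1 : forall x, 0 < x -> phi x * th1 x - phi1 x * theta x = 1).
  { intros x Hx. specialize (HW x Hx). unfold wronskian in HW. rewrite (Htheta x Hx). unfold th1, phi1.
    replace (phi x * (Derive y2 x / C0) - Derive phi x * (y2 x / C0))
      with ((phi x * Derive y2 x - Derive phi x * y2 x) / C0) by (field; auto).
    rewrite HW. field; auto. }
  assert (Hk : 4 * astar * cstar - bstar ^ 2 = 4).
  { apply (lim_const_eq (fun x => 4 * P x * S x - Q x ^ 2)); [|apply (lim_k P Q S lam); auto].
    intros x Hx. rewrite (HUP x Hx), (HUQ x Hx), (HUS x Hx), (HDth x Hx).
    transitivity ((4 * astar * cstar - bstar ^ 2) * (phi x * th1 x - phi1 x * theta x) ^ 2); [ring|].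
    rewrite (HW1 x Hx). ring. }
  assert (Ha : astar <> 0) by (intro E; rewrite E in Hk; nra).
  assert (Hc' : cstar = (bstar ^ 2 + 4) / (4 * astar)).
  { apply (Rmult_eq_reg_l (4 * astar)); [|lra].
    replace (4 * astar * ((bstar ^ 2 + 4) / (4 * astar))) with (bstar ^ 2 + 4) by (field; auto). lra. }
  set (be := bstar / (2 * astar)).
  set (u := fun x => theta x + be * phi x).
  set (u1 := fun x => th1 x + be * phi1 x).
  set (v := fun x => (-1 / astar) * phi x).
  set (v1 := fun x => (-1 / astar) * phi1 x).
  assert (Hu : forall x, 0 < x -> is_derive u x (u1 x)).
  { intros x Hx. apply lin_der; auto. }
  assert (Hu1 : forall x, 0 < x -> is_derive u1 x ((q x - lam) * u x)).
  { intros x Hx. replace ((q x - lam) * u x) with ((q x - lam) * theta x + be * ((q x - lam) * phi x))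
      by (unfold u; ring). apply lin_der; auto. }
  assert (Hv : forall x, 0 < x -> is_derive v x (v1 x)).
  { intros x Hx. apply sc_der; auto. }
  assert (Hv1 : forall x, 0 < x -> is_derive v1 x ((q x - lam) * v x)).
  { intros x Hx. replace ((q x - lam) * v x) with ((-1 / astar) * ((q x - lam) * phi x))
      by (unfold v; ring). apply sc_der; auto. }
  assert (ID : forall x, 0 < x -> S x = astar * (u x ^ 2 + v x ^ 2) /\ P x = astar * (u1 x ^ 2 + v1 x ^ 2) /\
     P x * (u x ^ 2 - v x ^ 2) + S x * (u1 x ^ 2 - v1 x ^ 2) + Q x * (u x * u1 x - v x * v1 x) = 0 /\
     P x * (2 * u x * v x) + S x * (2 * u1 x * v1 x) + Q x * (u x * v1 x + u1 x * v x) = 0).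
  { intros x Hx. pose proof (alg astar bstar (theta x) (th1 x) (phi x) (phi1 x) Ha) as AL. cbv zeta in AL.
    rewrite (HUP x Hx), (HUQ x Hx), (HUS x Hx), (HDth x Hx), Hc'. unfold u, u1, v, v1, be. exact AL. }
  assert (Eu : forall x, 0 < x -> ex_derive u x) by (intros; eexists; apply Hu; auto).
  assert (Eu1 : forall x, 0 < x -> ex_derive u1 x) by (intros; eexists; apply Hu1; auto).
  assert (Ev : forall x, 0 < x -> ex_derive v x) by (intros; eexists; apply Hv; auto).
  assert (Ev1 : forall x, 0 < x -> ex_derive v1 x) by (intros; eexists; apply Hv1; auto).
  assert (EP : forall x, 0 < x -> ex_derive P x) by (intros; eexists; apply HP; auto).
  assert (EQ : forall x, 0 < x -> ex_derive Q x) by (intros; eexists; apply HQ; auto).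
  assert (ES : forall x, 0 < x -> ex_derive S x) by (intros; eexists; apply HS; auto).
  assert (HH1 : forall x, 0 < x -> is_derive (fun t => u t * u1 t - v t * v1 t) x
      ((u1 x ^ 2 - v1 x ^ 2) + (q x - lam) * (u x ^ 2 - v x ^ 2))).
  { intros x Hx. auto_derive; [solve_exd|].
    rewrite (der_eq u x _ (Hu x Hx)), (der_eq u1 x _ (Hu1 x Hx)), (der_eq v x _ (Hv x Hx)), (der_eq v1 x _ (Hv1 x Hx)).
    ring. }
  assert (HH2 : forall x, 0 < x -> is_derive (fun t => u t * v1 t + u1 t * v t) x
      ((2 * u1 x * v1 x) + (q x - lam) * (2 * u x * v x))).
  { intros x Hx. auto_derive; [solve_exd|].
    rewrite (der_eq u x _ (Hu x Hx)), (der_eq u1 x _ (Hu1 x Hx)), (der_eq v x _ (Hv x Hx)), (der_eq v1 x _ (Hv1 x Hx)).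
    ring. }
  assert (HD1 : forall x, 0 < x -> continuous (fun t => - Q t * (u t * u1 t - v t * v1 t)
       + S t * ((u1 t ^ 2 - v1 t ^ 2) + (q t - lam) * (u t ^ 2 - v t ^ 2))) x).
  { intros x Hx. apply (@ex_derive_continuous R_AbsRing R_NormedModule). auto_derive. solve_exd. }
  assert (HD2 : forall x, 0 < x -> continuous (fun t => - Q t * (u t * v1 t + u1 t * v t)
       + S t * ((2 * u1 t * v1 t) + (q t - lam) * (2 * u t * v t))) x).
  { intros x Hx. apply (@ex_derive_continuous R_AbsRing R_NormedModule). auto_derive. solve_exd. }
  assert (HF1 : forall x, 0 < x -> continuous (fun t => u t ^ 2 - v t ^ 2) x).
  { intros x Hx. apply (@ex_derive_continuous R_AbsRing R_NormedModule). auto_derive. solve_exd. }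
  assert (HF2 : forall x, 0 < x -> continuous (fun t => 2 * u t * v t) x).
  { intros x Hx. apply (@ex_derive_continuous R_AbsRing R_NormedModule). auto_derive. solve_exd. }
  assert (Hg : forall x, 0 < x -> continuous (fun t => u t ^ 2 + v t ^ 2) x).
  { intros x Hx. apply (@ex_derive_continuous R_AbsRing R_NormedModule). auto_derive. solve_exd. }
  assert (HA : 0 <= 1 / Rabs astar).
  { left. apply Rdiv_lt_0_compat; [lra| apply Rabs_pos_lt; auto]. }
  assert (Hid1 : forall x, 0 < x ->
     P x * (u x ^ 2 - v x ^ 2) + S x * (u1 x ^ 2 - v1 x ^ 2) + Q x * (u x * u1 x - v x * v1 x) = 0)
    by (intros x Hx; apply (ID x Hx)).
  assert (Hid2 : forall x, 0 < x ->
     P x * (2 * u x * v x) + S x * (2 * u1 x * v1 x) + Q x * (u x * v1 x + u1 x * v x) = 0)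
    by (intros x Hx; apply (ID x Hx)).
  assert (Hb1 : forall x, 0 < x -> Rabs (u x ^ 2 - v x ^ 2) <= Rabs (S x) * (1 / Rabs astar)).
  { intros x Hx. pose proof (pow2_ge_0 (u x)); pose proof (pow2_ge_0 (v x)).
    apply (bnd1 astar (u x ^ 2 + v x ^ 2)); [auto| apply (ID x Hx)| lra|].
    apply Rabs_le; split; lra. }
  assert (Hb2 : forall x, 0 < x -> Rabs (2 * u x * v x) <= Rabs (S x) * (1 / Rabs astar)).
  { intros x Hx. pose proof (pow2_ge_0 (u x)); pose proof (pow2_ge_0 (v x)).
    pose proof (pow2_ge_0 (u x + v x)); pose proof (pow2_ge_0 (u x - v x)).
    apply (bnd1 astar (u x ^ 2 + v x ^ 2)); [auto| apply (ID x Hx)| lra|].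
    apply Rabs_le; split; nra. }
  assert (Hc1 : forall x, 0 < x -> Rabs (u x * u1 x - v x * v1 x) <= (Rabs (S x) + Rabs (P x)) * (1 / Rabs astar)).
  { intros x Hx. apply (bnd2 astar (u x ^ 2 + v x ^ 2) (u1 x ^ 2 + v1 x ^ 2));
      [auto| apply (ID x Hx)| apply (ID x Hx)| idtac| idtac|].
    all: pose proof (pow2_ge_0 (u x)); pose proof (pow2_ge_0 (v x));
         pose proof (pow2_ge_0 (u1 x)); pose proof (pow2_ge_0 (v1 x)); try lra.
    all: pose proof (pow2_ge_0 (u x + u1 x)); pose proof (pow2_ge_0 (u x - u1 x));
         pose proof (pow2_ge_0 (v x + v1 x)); pose proof (pow2_ge_0 (v x - v1 x));
         pose proof (pow2_ge_0 (u x + v1 x)); pose proof (pow2_ge_0 (u x - v1 x));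
         pose proof (pow2_ge_0 (u1 x + v x)); pose proof (pow2_ge_0 (u1 x - v x)).
    all: apply Rabs_le; split; nra. }
  assert (Hc2 : forall x, 0 < x -> Rabs (u x * v1 x + u1 x * v x) <= (Rabs (S x) + Rabs (P x)) * (1 / Rabs astar)).
  { intros x Hx. apply (bnd2 astar (u x ^ 2 + v x ^ 2) (u1 x ^ 2 + v1 x ^ 2));
      [auto| apply (ID x Hx)| apply (ID x Hx)| idtac| idtac|].
    all: pose proof (pow2_ge_0 (u x)); pose proof (pow2_ge_0 (v x));
         pose proof (pow2_ge_0 (u1 x)); pose proof (pow2_ge_0 (v1 x)); try lra.
    all: pose proof (pow2_ge_0 (u x + u1 x)); pose proof (pow2_ge_0 (u x - u1 x));
         pose proof (pow2_ge_0 (v x + v1 x)); pose proof (pow2_ge_0 (v x - v1 x));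
         pose proof (pow2_ge_0 (u x + v1 x)); pose proof (pow2_ge_0 (u x - v1 x));
         pose proof (pow2_ge_0 (u1 x + v x)); pose proof (pow2_ge_0 (u1 x - v x)).
    all: apply Rabs_le; split; nra. }
  assert (CF1 := core_F lam q P Q S (fun t => u t ^ 2 - v t ^ 2) (fun t => u1 t ^ 2 - v1 t ^ 2)
     (fun t => u t * u1 t - v t * v1 t) (1 / Rabs astar) x0 Hlam Hx0 HA HS HH1 HD1 HF1
     Hid1 Hb1 Hc1 HPlim HQlim HSlim Hqinf).
  assert (CF2 := core_F lam q P Q S (fun t => 2 * u t * v t) (fun t => 2 * u1 t * v1 t)
     (fun t => u t * v1 t + u1 t * v t) (1 / Rabs astar) x0 Hlam Hx0 HA HS HH2 HD2 HF2
     Hid2 Hb2 Hc2 HPlim HQlim HSlim Hqinf).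
  assert (CD := core_D lam S (fun t => u t ^ 2 + v t ^ 2) astar x0 Hlam Hx0 Hg
     ltac:(intros; nra) ltac:(intros x Hx; apply (ID x Hx)) HSlim).
  assert (R1 := ratio (fun N => RInt (fun t => u t ^ 2 - v t ^ 2) x0 N)
     (fun N => RInt (fun t => u t ^ 2 + v t ^ 2) x0 N) x0 CF1 CD).
  assert (R2 := ratio (fun N => RInt (fun t => 2 * u t * v t) x0 N)
     (fun N => RInt (fun t => u t ^ 2 + v t ^ 2) x0 N) x0 CF2 CD).
  assert (Hpsi : forall x, psi x = (u x, v x)).
  { intros x. unfold psi, xi, Cminus, Cmult, Cplus, Copp, RtoC, u, v, be. simpl. f_equal; field; auto. }
  apply filterlim_locally. intros eps.
  destruct (R1 eps (cond_pos eps)) as [M1 HM1].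
  destruct (R2 eps (cond_pos eps)) as [M2 HM2].
  exists (Rmax (Rmax M1 M2) x0). intros N HN.
  pose proof (Rmax_l (Rmax M1 M2) x0). pose proof (Rmax_r (Rmax M1 M2) x0).
  pose proof (Rmax_l M1 M2). pose proof (Rmax_r M1 M2).
  destruct (HM1 N ltac:(lra)) as [HDp B1]. destruct (HM2 N ltac:(lra)) as [_ B2].
  simpl in HDp, B1, B2.
  assert (HNp : 0 < N) by lra.
  assert (E1 : RInt (fun x => Cmod (psi x) ^ 2) x0 N = RInt (fun t => u t ^ 2 + v t ^ 2) x0 N).
  { apply RInt_ext. intros x _. rewrite Hpsi. unfold Cmod. simpl fst; simpl snd.
    assert (0 <= u x ^ 2 + v x ^ 2) by (pose proof (pow2_ge_0 (u x)); pose proof (pow2_ge_0 (v x)); lra).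
    rewrite <- Rsqr_pow2, Rsqr_sqrt; auto. }
  assert (E2 : @RInt C_R_CompleteNormedModule (fun x => Cmult (psi x) (psi x)) x0 N =
     (RInt (fun t => u t ^ 2 - v t ^ 2) x0 N, RInt (fun t => 2 * u t * v t) x0 N)).
  { apply is_RInt_unique. apply is_RInt_fct_extend_pair.
    - eapply is_RInt_ext; [|apply (@RInt_correct R_CompleteNormedModule); apply exRInt_pos; auto].
      intros x _. rewrite Hpsi. simpl. ring.
    - eapply is_RInt_ext; [|apply (@RInt_correct R_CompleteNormedModule); apply exRInt_pos; auto].
      intros x _. rewrite Hpsi. simpl. ring. }
  rewrite E1, E2. rewrite Cdiv_real.
  2: { apply Rgt_not_eq. exact HDp. }
  apply ball_C; auto.
Qed.
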